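(* Assume in addition that $f_i'(u)+1\neq 0$ for all $u\in\mathbb R$ and all $1\le i\le k$. Then $\mathcal M_F$ is $0$-modeled on $\mathcal V=(\mathbb R^{3k+2},(\cdot,\cdot),R)$: for every point $P\in\mathbb R^{3k+2}$ there is a linear isometry $\Phi_P:(T_P\mathbb R^{3k+2},g_F|_P)\to(\mathbb R^{3k+2},(\cdot,\cdot))$ with $\Phi_P^*R=R_P$, where $R_P$ is the curvature tensor of $g_F$ at $P$. Equivalently, every tangent space $T_P\mathcal M_F$ admits a normalized basis with respect to $g_F|_P$ and $R_P$. In particular $\mathcal M_F$ is $0$-curvature homogeneous.
   Context: Fix an integer $k\ge 1$ and signs $\varepsilon_1,\dots,\varepsilon_k\in\{\pm1\}$. Let $f_1,\dots,f_k:\mathbb R\to\mathbb R$ be smooth functions and $F=(f_1,\dots,f_k)$. On $\mathbb R^{3k+2}$ with coordinates $(u_0,\dots,u_k,v_0,\dots,v_k,s_1,\dots,s_k)$ let $g_F$ be the symmetric metric whose only nonzero components on coordinate vector fields are (up to symmetry), for $1\le i\le k$ and $0\le i',j\le k$: $g_F(\partial_{u_0},\partial_{u_i})=2f_i(u_i)s_i$, $g_F(\partial_{u_i},\partial_{u_i})=-2u_0s_i$, $g_F(\partial_{u_{i'}},\partial_{v_j})=\delta_{i'j}$, $g_F(\partial_{s_i},\partial_{s_i})=\varepsilon_i$. Write $\mathcal M_F=(\mathbb R^{3k+2},g_F)$, $\nabla$ for its Levi-Civita connection and $R(X,Y,Z,W)=g_F(\nabla_X\nabla_YZ-\nabla_Y\nabla_XZ-\nabla_{[X,Y]}Z,W)$.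 Model: let $V=\mathbb R^{3k+2}$ with basis $\{U_0,\dots,U_k,V_0,\dots,V_k,S_1,\dots,S_k\}$, let $(\cdot,\cdot)$ be the symmetric inner product whose only nonzero values on pairs of basis vectors are $(U_i,V_i)=(V_i,U_i)=1$ for $0\le i\le k$ and $(S_i,S_i)=\varepsilon_i$ for $1\le i\le k$, and let $R$ be the algebraic curvature tensor on $V$ (a 4-linear form with $R(x,y,z,w)=-R(y,x,z,w)=R(z,w,x,y)$ and $R(x,y,z,w)+R(y,z,x,w)+R(z,x,y,w)=0$) whose only nonzero values on 4-tuples of basis vectors are those obtained from $R(U_0,U_i,U_i,S_i)=1$ ($1\le i\le k$) by these symmetries. Set $\mathcal V=(V,(\cdot,\cdot),R)$. Given a vector space $W$ with a symmetric bilinear form $\langle\cdot,\cdot\rangle$ and a 4-tensor $T$, a normalized basis of $(W,\langle\cdot,\cdot\rangle,T)$ is a basis $\{U_0',\dots,U_k',V_0',\dots,V_k',S_1',\dots,S_k'\}$ on which $\langle\cdot,\cdot\rangle$ and $T$ take exactly the values just described for $(\cdot,\cdot)$ and $R$ on the standard basis. *)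

(* Defs.v *)
From HB Require Import structures.
From mathcomp Require Import all_boot all_order all_algebra.
From mathcomp Require Import all_classical all_reals all_analysis.
Set Implicit Arguments. Unset Strict Implicit. Unset Printing Implicit Defensive.
Import Order.TTheory GRing.Theory Num.Theory.
Local Open Scope ring_scope.

Section Defs.
Variables (R : realType) (k : nat).

(* dimension 3k+2 = (k+1) + (k+1) + k ; coordinates ordered
   u_0..u_k, v_0..v_k, s_1..s_k *)
Definition dimF := (k.+1 + k.+1 + k)%N.

Definition Uix (i : 'I_k.+1) : 'I_dimF := lshift k (lshift k.+1 i).
Definition Vix (i : 'I_k.+1) : 'I_dimF := lshift k (rshift k.+1 i).
(* Six i is the index of s_{i+1}, i : 'I_k *)
Definition Six (i : 'I_k) : 'I_dimF := rshift (k.+1 + k.+1) i.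
(* U0 = index of u_0, Ui i = index of u_{i+1}, i : 'I_k *)
Definition U0 : 'I_dimF := Uix ord0.
Definition Ui (i : 'I_k) : 'I_dimF := Uix (lift ord0 i).

Definition symE (a b : 'I_dimF) : 'M[R]_dimF := delta_mx a b + delta_mx b a.

(* the matrix of g_F at the point P (P : row vector of coordinates).
   F i is f_{i+1}, eps i is epsilon_{i+1}. *)
Definition gF (F : 'I_k -> R -> R) (eps : 'I_k -> R) (P : 'rV[R]_dimF)
  : 'M[R]_dimF :=
  \sum_(i < k) ((2 * F i (P 0 (Ui i)) * P 0 (Six i)) *: symE U0 (Ui i)
                 + (- 2 * P 0 U0 * P 0 (Six i)) *: delta_mx (Ui i) (Ui i))
  + \sum_(j < k.+1) symE (Uix j) (Vix j)
  + \sum_(i < k) eps i *: delta_mx (Six i) (Six i).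

Definition bform (M : 'M[R]_dimF) (x y : 'rV[R]_dimF) : R :=
  (x *m M *m y^T) 0 0.

Definition partial (h : 'rV[R]_dimF -> R) (a : 'I_dimF) (P : 'rV[R]_dimF) : R :=
  derive1 (fun t : R => h (P + t *: delta_mx 0 a)) 0.

(* Christoffel symbols of the first kind:
   Gamma1 g P d b c = g(nabla_{d_b} d_c, d_d) at P (Koszul formula) *)
Definition Gamma1 (g : 'rV[R]_dimF -> 'M[R]_dimF) (P : 'rV[R]_dimF)
  (d b c : 'I_dimF) : R :=
  (partial (fun Q => g Q d c) b P + partial (fun Q => g Q d b) c P
   - partial (fun Q => g Q b c) d P) / 2.

(* components R(d_a,d_b,d_c,d_d) of the curvature tensor
   R(X,Y,Z,W) = g(nabla_X nabla_Y Z - nabla_Y nabla_X Z - nabla_[X,Y] Z, W)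
   of the Levi-Civita connection, on coordinate fields ([d_a,d_b] = 0):
   g(nabla_a nabla_b d_c, d_d) = d_a Gamma1_{dbc} - g^{ef} Gamma1_{fbc} Gamma1_{ead} *)
Definition Rcoord (g : 'rV[R]_dimF -> 'M[R]_dimF) (P : 'rV[R]_dimF)
  (a b c d : 'I_dimF) : R :=
  partial (fun Q => Gamma1 g Q d b c) a P - partial (fun Q => Gamma1 g Q d a c) b P
  - \sum_(e < dimF) \sum_(f < dimF) (invmx (g P) e f *
       (Gamma1 g P f b c * Gamma1 g P e a d - Gamma1 g P f a c * Gamma1 g P e b d)).

Definition curvP (g : 'rV[R]_dimF -> 'M[R]_dimF) (P : 'rV[R]_dimF)
  (x y z w : 'rV[R]_dimF) : R :=
  \sum_(a < dimF) \sum_(b < dimF) \sum_(c < dimF) \sum_(d < dimF)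
    (x 0 a * y 0 b * z 0 c * w 0 d * Rcoord g P a b c d).

Definition modelG (eps : 'I_k -> R) : 'M[R]_dimF :=
  \sum_(j < k.+1) symE (Uix j) (Vix j)
  + \sum_(i < k) eps i *: delta_mx (Six i) (Six i).

(* model algebraic curvature tensor: the multilinear extension of the
   basis values generated by R(U_0,U_i,U_i,S_i) = 1 under the symmetries,
   i.e. R = sum_i (alpha_i (x) beta_i + beta_i (x) alpha_i) with
   alpha_i = U_0^* /\ U_i^*, beta_i = U_i^* /\ S_i^*. *)
Definition wedge2 (p q : 'I_dimF) (x y : 'rV[R]_dimF) : R :=
  x 0 p * y 0 q - x 0 q * y 0 p.

Definition modelR (x y z w : 'rV[R]_dimF) : R :=
  \sum_(i < k) (wedge2 U0 (Ui i) x y * wedge2 (Ui i) (Six i) z w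
              + wedge2 (Ui i) (Six i) x y * wedge2 U0 (Ui i) z w).

End Defs.

(* Main.v *)
Require Import Defs.
From HB Require Import structures.
From mathcomp Require Import all_boot all_order all_algebra.
From mathcomp Require Import all_classical all_reals all_analysis.
From mathcomp Require Import ring.
Import Order.TTheory GRing.Theory Num.Theory.
Local Open Scope ring_scope.
Set Implicit Arguments. Unset Strict Implicit. Unset Printing Implicit Defensive.

Section Idx.
Variable k : nat.
Local Notation n := (dimF k).

Lemma eqUU (i j : 'I_k.+1) : (Uix i == Uix j) = (i == j).
Proof. by rewrite /Uix !eq_lshift. Qed.
Lemma eqVV (i j : 'I_k.+1) : (Vix i == Vix j) = (i == j).
Proof. by rewrite /Vix eq_lshift eq_rshift. Qed.
Lemma eqSS (i j : 'I_k) : (Six i == Six j) = (i == j).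
Proof. by rewrite /Six eq_rshift. Qed.
Lemma eqUV (i j : 'I_k.+1) : (Uix i == Vix j) = false.
Proof. by rewrite /Uix /Vix eq_lshift eq_lrshift. Qed.
Lemma eqVU (i j : 'I_k.+1) : (Vix i == Uix j) = false.
Proof. by rewrite eq_sym eqUV. Qed.
Lemma eqUS (i : 'I_k.+1) (j : 'I_k) : (Uix i == Six j) = false.
Proof. by rewrite /Uix /Six eq_lrshift. Qed.
Lemma eqSU (i : 'I_k.+1) (j : 'I_k) : (Six j == Uix i) = false.
Proof. by rewrite eq_sym eqUS. Qed.
Lemma eqVS (i : 'I_k.+1) (j : 'I_k) : (Vix i == Six j) = false.
Proof. by rewrite /Vix /Six eq_lrshift. Qed.
Lemma eqSV (i : 'I_k.+1) (j : 'I_k) : (Six j == Vix i) = false.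
Proof. by rewrite eq_sym eqVS. Qed.
Lemma eqLL (i j : 'I_k) : (lift ord0 i == lift ord0 j :> 'I_k.+1) = (i == j).
Proof. by rewrite (inj_eq (@lift_inj _ ord0)). Qed.
Lemma eq0L (i : 'I_k) : (ord0 == lift ord0 i :> 'I_k.+1) = false.
Proof. exact: eq_liftF. Qed.
Lemma eqL0 (i : 'I_k) : (lift ord0 i == ord0 :> 'I_k.+1) = false.
Proof. by rewrite eq_sym eq_liftF. Qed.

Definition eqidx := (eqUU, eqVV, eqSS, eqUV, eqVU, eqUS, eqSU, eqVS, eqSV, eqLL, eq0L, eqL0).

Lemma sum_blocks (R : nmodType) (f : 'I_n -> R) :
  \sum_(m < n) f m = \sum_(j < k.+1) f (Uix j) + \sum_(j < k.+1) f (Vix j)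
                     + \sum_(l < k) f (Six l).
Proof. by rewrite /dimF big_split_ord /= big_split_ord. Qed.

Lemma idx_cases (m : 'I_n) :
  [\/ exists j, m = Uix j, exists j, m = Vix j | exists l, m = Six l].
Proof.
case: (split_ordP m) => [m1 -> | l ->]; last by apply: Or33; exists l.
case: (split_ordP m1) => [j -> | j ->]; first by apply: Or31; exists j.
by apply: Or32; exists j.
Qed.
End Idx.


Section Der.
Variable R : realType.
Implicit Types f g : R -> R.

Lemma isdC (c : R) : is_derive (0:R) (1:R) (fun _ : R => c) 0.
Proof. exact: is_derive_cst. Qed.

Lemma isdD f g df dg v : is_derive (0:R) 1 f df -> is_derive (0:R) 1 g dg ->
  v = df + dg -> is_derive (0:R) 1 (fun t => f t + g t) v.
Proof. by move=> hf hg ->; exact: is_deriveD. Qed.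

Lemma isdM f g df dg v : is_derive (0:R) 1 f df -> is_derive (0:R) 1 g dg ->
  v = f 0 * dg + g 0 * df -> is_derive (0:R) 1 (fun t => f t * g t) v.
Proof. by move=> hf hg ->; exact: is_deriveM. Qed.

Lemma isd_lin (p c : R) : is_derive (0:R) 1 (fun t => p + t * c) c.
Proof.
have hid : is_derive (0:R) 1 (fun t : R => t) 1 := @is_derive_id R R^o 0 1.
have hm : is_derive (0:R) 1 (fun t => t * c) c.
  apply: (isdM hid (isdC c)); simpl; ring.
by apply: (isdD (isdC p) hm); rewrite add0r.
Qed.

Lemma isd_comp (phi : R -> R) f df : is_derive (0:R) 1 f df ->
  (forall x, derivable phi x 1) ->
  is_derive (0:R) 1 (fun t => phi (f t)) (phi^`()%classic (f 0) * df).
Proof.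
move=> hf hphi.
have df1 : derivable f 0 1 by case: hf.
have dphi : derivable phi (f 0) 1 := hphi (f 0).
have dcomp : derivable (phi \o f) 0 1.
  apply/derivable1_diffP; apply: differentiable_comp;
  exact/derivable1_diffP.
apply: DeriveDef; first exact: dcomp.
have := derive1_comp df1 dphi; rewrite !derive1E => ->.
by rewrite (@derive_val _ _ _ _ _ _ _ hf).
Qed.

Lemma isd_sum m (h : 'I_m -> R -> R) (dh : 'I_m -> R) :
  (forall i, is_derive (0:R) 1 (h i) (dh i)) ->
  is_derive (0:R) 1 (fun t => \sum_(i < m) h i t) (\sum_(i < m) dh i).
Proof.
move=> H; have := is_derive_sum H.
by rewrite fct_sumE.
Qed.

End Der.
Section Der2.
Variable R : realType.
Implicit Types f g : R -> R.

Lemma isd_cmul f df (c : R) : is_derive (0:R) 1 f df ->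
  is_derive (0:R) 1 (fun t => c * f t) (c * df).
Proof. by move=> hf; apply: (isdM (isdC c) hf); rewrite mulr0 addr0. Qed.

Lemma isd_complin (phi : R -> R) (p c : R) :
  (forall x, derivable phi x 1) ->
  is_derive (0:R) 1 (fun t => phi (p + t * c)) (phi^`()%classic p * c).
Proof.
move=> hphi; have := isd_comp (isd_lin p c) hphi.
by rewrite mul0r addr0.
Qed.

Lemma isd_eq f df v : is_derive (0:R) 1 f df -> df = v -> is_derive (0:R) 1 f v.
Proof. by move=> h <-. Qed.
End Der2.

Section Tmpl.
Variables (R : realType) (k : nat).
Local Notation n := (dimF k).

Definition ind (b m : 'I_n) : R := (b == m)%:R.

Lemma coordE (P : 'rV[R]_n) t b m : (P + t *: delta_mx 0 b) 0 m = P 0 m + t * ind b m.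
Proof. by rewrite !mxE eqxx /= eq_sym. Qed.

Lemma partialE (h : 'rV[R]_n -> R) b P v :
  is_derive (0:R) 1 (fun t => h (P + t *: delta_mx 0 b)) v -> partial h b P = v.
Proof. by move=> H; rewrite /partial derive1E (@derive_val _ _ _ _ _ _ _ H). Qed.

Definition tmpl (phi psi : 'I_k -> R -> R) (al be ga et th : 'I_k -> R) (ka : R)
  (Q : 'rV[R]_n) : R :=
  \sum_(i < k) (al i * phi i (Q 0 (Ui i)) * Q 0 (Six i) + be i * psi i (Q 0 (Ui i))
     + ga i * Q 0 (U0 k) * Q 0 (Six i) + et i * Q 0 (Six i) + th i * Q 0 (U0 k)) + ka.

Definition dtmpl (phi psi : 'I_k -> R -> R) (al be ga et th : 'I_k -> R)
  (P : 'rV[R]_n) (b : 'I_n) : R :=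
  \sum_(i < k) (al i * ((phi i)^`()%classic (P 0 (Ui i)) * ind b (Ui i) * P 0 (Six i)
                        + phi i (P 0 (Ui i)) * ind b (Six i))
     + be i * ((psi i)^`()%classic (P 0 (Ui i)) * ind b (Ui i))
     + ga i * (ind b (U0 k) * P 0 (Six i) + P 0 (U0 k) * ind b (Six i))
     + et i * ind b (Six i) + th i * ind b (U0 k)).

Lemma partial_tmpl (phi psi : 'I_k -> R -> R) (al be ga et th : 'I_k -> R) (ka : R)
  (b : 'I_n) (P : 'rV[R]_n) :
  (forall i (x : R), derivable (phi i) x 1) -> (forall i (x : R), derivable (psi i) x 1) ->
  partial (tmpl phi psi al be ga et th ka) b P = dtmpl phi psi al be ga et th P b.
Proof.
move=> hphi hpsi; apply: partialE.
have -> : (fun t => tmpl phi psi al be ga et th ka (P + t *: delta_mx 0 b)) =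
  (fun t => \sum_(i < k)
    (al i * phi i (P 0 (Ui i) + t * ind b (Ui i)) * (P 0 (Six i) + t * ind b (Six i))
     + be i * psi i (P 0 (Ui i) + t * ind b (Ui i))
     + ga i * (P 0 (U0 k) + t * ind b (U0 k)) * (P 0 (Six i) + t * ind b (Six i))
     + et i * (P 0 (Six i) + t * ind b (Six i)) + th i * (P 0 (U0 k) + t * ind b (U0 k)))
    + ka).
  by apply: funext => t; rewrite /tmpl; congr (_ + _); apply: eq_bigr => i _; rewrite !coordE.
apply: (isd_eq (isdD (isd_sum _) (isdC ka) (erefl _))); last by rewrite addr0.
move=> i /=.
set pu := P 0 (Ui i); set ps := P 0 (Six i); set p0 := P 0 (U0 k).
set cu := ind b (Ui i); set cs := ind b (Six i); set c0 := ind b (U0 k).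
have hs := isd_lin ps cs; have hu := isd_lin pu cu; have h0 := isd_lin p0 c0.
have h1 := isdM (isd_cmul (al i) (isd_complin pu cu (hphi i))) hs (erefl _).
have h2 := isd_cmul (be i) (isd_complin pu cu (hpsi i)).
have h3 := isdM (isd_cmul (ga i) h0) hs (erefl _).
have h4 := isd_cmul (et i) hs.
have h5 := isd_cmul (th i) h0.
apply: (isd_eq (isdD (isdD (isdD (isdD h1 h2 (erefl _)) h3 (erefl _)) h4 (erefl _)) h5 (erefl _))).
rewrite !mul0r !addr0; ring.
Qed.
End Tmpl.
Arguments ind {R k}.
Section Main.
Variables (R : realType) (k : nat) (eps : 'I_k -> R) (F : 'I_k -> R -> R).
Hypothesis hsmooth : forall (i : 'I_k) (n : nat) (x : R), derivable (derive1n n (F i)) x 1.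
Local Notation n := (dimF k).
Local Notation F1 i := ((F i)^`()%classic).
Local Notation F2 i := (((F i)^`())^`()%classic).
Local Notation g := (gF F eps).

Lemma dF0 (i : 'I_k) (x : R) : derivable (F i) x 1. Proof. by have := @hsmooth i 0 x; rewrite derive1n0. Qed.
Lemma dF1 (i : 'I_k) (x : R) : derivable (F1 i) x 1. Proof. by have := @hsmooth i 1 x; rewrite derive1n1. Qed.

Definition Smx (i : 'I_k) : 'M[R]_n := symE R (U0 k) (Ui i).
Definition Dmx (i : 'I_k) : 'M[R]_n := delta_mx (Ui i) (Ui i).

Lemma gF_split Q : g Q = \sum_(i < k) ((2 * F i (Q 0 (Ui i)) * Q 0 (Six i)) *: Smx i
                 + (- 2 * Q 0 (U0 k) * Q 0 (Six i)) *: Dmx i) + modelG eps.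
Proof. by rewrite /gF /modelG addrA. Qed.

Lemma gF_tmpl r c : (fun Q => g Q r c) =
  tmpl F F (fun i => 2 * Smx i r c) (fun _ => 0) (fun i => -2 * Dmx i r c)
       (fun _ => 0) (fun _ => 0) (modelG eps r c).
Proof.
apply: funext => Q; rewrite gF_split /tmpl mxE summxE; congr (_ + _).
apply: eq_bigr => i _; rewrite mxE [(_ *: Smx i) r c]mxE [(_ *: Dmx i) r c]mxE.
ring.
Qed.

Lemma dg_E r c b P : partial (fun Q => g Q r c) b P =
  \sum_(i < k) (2 * Smx i r c * (F1 i (P 0 (Ui i)) * ind b (Ui i) * P 0 (Six i)
                                  + F i (P 0 (Ui i)) * ind b (Six i))
              - 2 * Dmx i r c * (ind b (U0 k) * P 0 (Six i) + P 0 (U0 k) * ind b (Six i))).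
Proof.
rewrite gF_tmpl partial_tmpl; [|exact: dF0|exact: dF0].
rewrite /dtmpl; apply: eq_bigr => i _; ring.
Qed.

Definition aG (d b c : 'I_n) (i : 'I_k) : R :=
  Smx i d c * ind b (Ui i) + Smx i d b * ind c (Ui i) - Smx i b c * ind d (Ui i).
Definition bG (d b c : 'I_n) (i : 'I_k) : R :=
  Smx i d c * ind b (Six i) + Smx i d b * ind c (Six i) - Smx i b c * ind d (Six i).
Definition eG (d b c : 'I_n) (i : 'I_k) : R :=
  - (Dmx i d c * ind b (U0 k) + Dmx i d b * ind c (U0 k) - Dmx i b c * ind d (U0 k)).
Definition tG (d b c : 'I_n) (i : 'I_k) : R :=
  - (Dmx i d c * ind b (Six i) + Dmx i d b * ind c (Six i) - Dmx i b c * ind d (Six i)).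

Lemma Gamma_tmpl d b c : (fun Q => Gamma1 g Q d b c) =
  tmpl (fun i => F1 i) F (aG d b c) (bG d b c) (fun _ => 0) (eG d b c) (tG d b c) 0.
Proof.
apply: funext => Q; rewrite /Gamma1 !dg_E /tmpl addr0.
rewrite -big_split /= -sumrB mulr_suml; apply: eq_bigr => i _.
rewrite /aG /bG /eG /tG; by field.
Qed.

Lemma dGamma_E a d b c P : partial (fun Q => Gamma1 g Q d b c) a P =
  dtmpl (fun i => F1 i) F (aG d b c) (bG d b c) (fun _ => 0) (eG d b c) (tG d b c) P a.
Proof. by rewrite Gamma_tmpl partial_tmpl //; [exact: dF1|exact: dF0]. Qed.

End Main.
Arguments Smx {R k}.
Arguments Dmx {R k}.
Arguments aG {R k}.
Arguments bG {R k}.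
Arguments eG {R k}.
Arguments tG {R k}.
Lemma bR (R : pzSemiRingType) (a b : bool) : ((a && b)%:R : R) = a%:R * b%:R.
Proof. by case: a; case: b; rewrite /= ?mul0r ?mul1r. Qed.

Lemma fR (R : pzSemiRingType) : ((false)%:R : R) = 0. Proof. by []. Qed.
Lemma tR (R : pzSemiRingType) : ((true)%:R : R) = 1. Proof. by []. Qed.

Lemma sum_pick (R : pzSemiRingType) (I : finType) (j : I) (f : I -> R) :
  \sum_(i : I) f i * (i == j)%:R = f j.
Proof.
rewrite (bigD1 j) //= eqxx mulr1 big1 ?addr0 // => i /negPf ->; by rewrite mulr0.
Qed.

Section Main2.
Variables (R : realType) (k : nat) (eps : 'I_k -> R) (F : 'I_k -> R -> R).
Hypothesis hsmooth : forall (i : 'I_k) (n : nat) (x : R), derivable (derive1n n (F i)) x 1.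
Local Notation n := (dimF k).
Local Notation F1 i := ((F i)^`()%classic).
Local Notation g := (gF F eps).

Lemma Gamma_E Q d b c : Gamma1 g Q d b c =
  tmpl (fun i => F1 i) F (aG d b c) (bG d b c) (fun _ => 0) (eG d b c) (tG d b c) 0 Q.
Proof. exact: (congr1 (fun f => f Q) (Gamma_tmpl eps hsmooth d b c)). Qed.

Lemma Gamma_V P j b c : Gamma1 g P (Vix j) b c = 0.
Proof.
rewrite Gamma_E /tmpl addr0 big1 // => i _.
rewrite /aG /bG /eG /tG /Smx /Dmx /symE /ind !mxE /U0 /Ui !eqidx /=; ring.
Qed.

Lemma Gamma_S P l b c : Gamma1 g P (Six l) b c =
  - F l (P 0 (Ui l)) * Smx l b c + P 0 (U0 k) * Dmx l b c.
Proof.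
rewrite Gamma_E /tmpl addr0.
transitivity (\sum_(i < k) (- F i (P 0 (Ui i)) * Smx i b c + P 0 (U0 k) * Dmx i b c) * (i == l)%:R).
  apply: eq_bigr => i _.
  rewrite /aG /bG /eG /tG /Smx /Dmx /symE /ind !mxE /U0 /Ui !eqidx /= [l == i]eq_sym; ring.
by rewrite sum_pick.
Qed.
End Main2.
Section Main3.
Variables (R : realType) (k : nat) (eps : 'I_k -> R) (F : 'I_k -> R -> R).
Local Notation n := (dimF k).
Local Notation g := (gF F eps).

Lemma gcolV P (r : 'I_n) j : g P r (Vix j) = (r == Uix j)%:R.
Proof.
rewrite gF_split mxE summxE big1 ?add0r; last first.
  by move=> i _; rewrite !mxE /U0 /Ui !eqidx /= ?andbF ?fR; ring.
rewrite /modelG mxE !summxE [X in _ + X]big1 ?addr0; last first.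
  by move=> i _; rewrite !mxE !eqidx /= ?andbF ?fR; ring.
transitivity (\sum_(j0 < k.+1) ((r == Uix j0)%:R : R) * (j0 == j)%:R); last by rewrite sum_pick.
apply: eq_bigr => j0 _; rewrite !mxE !eqidx /= ?andbF ?addr0 bR [j == _]eq_sym.
done.
Qed.

Lemma gcolS P (r : 'I_n) l : g P r (Six l) = eps l * (r == Six l)%:R.
Proof.
rewrite gF_split mxE summxE big1 ?add0r; last first.
  by move=> i _; rewrite !mxE /U0 /Ui !eqidx /= ?andbF ?fR; ring.
rewrite /modelG mxE !summxE [X in X + _]big1 ?add0r; last first.
  by move=> i _; rewrite !mxE !eqidx /= ?andbF ?fR; ring.
transitivity (\sum_(i < k) (eps i * (r == Six i)%:R) * (i == l)%:R); last by rewrite sum_pick.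
apply: eq_bigr => i _; rewrite !mxE !eqidx /= bR [l == _]eq_sym; ring.
Qed.

Lemma gVU P j' j : g P (Vix j') (Uix j) = (j' == j)%:R.
Proof.
rewrite gF_split mxE summxE big1 ?add0r; last first.
  by move=> i _; rewrite !mxE /U0 /Ui !eqidx /= ?andbF ?fR; ring.
rewrite /modelG mxE !summxE [X in _ + X]big1 ?addr0; last first.
  by move=> i _; rewrite !mxE !eqidx /= ?andbF ?fR; ring.
transitivity (\sum_(j0 < k.+1) ((j' == j0)%:R : R) * (j0 == j)%:R); last by rewrite sum_pick.
apply: eq_bigr => j0 _; rewrite !mxE !eqidx /= ?fR ?add0r bR [j == _]eq_sym; done.
Qed.

Lemma gSU P l j : g P (Six l) (Uix j) = 0.
Proof.
rewrite gF_split mxE summxE big1 ?add0r; last first.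
  by move=> i _; rewrite !mxE /U0 /Ui !eqidx /= ?andbF ?fR; ring.
rewrite /modelG mxE !summxE big1 ?add0r; last first.
  by move=> i _; rewrite !mxE !eqidx /= ?andbF ?fR; ring.
by rewrite big1 // => i _; rewrite !mxE !eqidx /= ?andbF ?fR; ring.
Qed.

Hypothesis heps : forall i, eps i = 1 \/ eps i = -1.

Lemma eps2 i : eps i * eps i = 1.
Proof. by case: (heps i) => ->; rewrite ?mulr1 ?mulrNN ?mulr1. Qed.

Lemma gunit P : g P \in unitmx.
Proof.
rewrite -row_free_unit; apply: inj_row_free => v hv.
have hc c : \sum_(m < n) v 0 m * g P m c = 0.
  by have := congr1 (fun M : 'M[R]_(1, n) => M 0 c) hv; rewrite !mxE.
have hU j : v 0 (Uix j) = 0.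
  by have := hc (Vix j); under eq_bigr => m _ do rewrite gcolV; rewrite sum_pick.
have hS l : v 0 (Six l) = 0.
  have := hc (Six l); under eq_bigr => m _ do rewrite gcolS mulrA; rewrite sum_pick.
  move/eqP; rewrite mulf_eq0 => /orP [/eqP // | /eqP e].
  by have := eps2 l; rewrite e mul0r => /eqP; rewrite eq_sym oner_eq0.
have hV j : v 0 (Vix j) = 0.
  have := hc (Uix j); rewrite sum_blocks.
  rewrite big1 ?add0r; last by move=> j0 _; rewrite hU mul0r.
  rewrite [X in _ + X]big1 ?addr0; last by move=> l _; rewrite gSU mulr0.
  by under eq_bigr => j0 _ do rewrite gVU; rewrite sum_pick.
apply/matrixP => i m; rewrite (ord1 i) mxE.
by case: (idx_cases m) => [[j ->]|[j ->]|[l ->]].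
Qed.

Lemma HcolU P e j : invmx (g P) e (Uix j) = (e == Vix j)%:R.
Proof.
have := congr1 (fun M : 'M[R]_n => M e (Vix j)) (mulVmx (gunit P)); rewrite !mxE.
by under eq_bigr => m _ do rewrite gcolV; rewrite sum_pick.
Qed.

Lemma HcolS P e l : invmx (g P) e (Six l) = eps l * (e == Six l)%:R.
Proof.
have := congr1 (fun M : 'M[R]_n => M e (Six l)) (mulVmx (gunit P)); rewrite !mxE.
under eq_bigr => m _ do rewrite gcolS mulrA; rewrite sum_pick => <-.
by rewrite mulrCA eps2 mulr1.
Qed.

Lemma quadH P (X1 Y1 X2 Y2 : 'I_n -> R) :
  (forall j, X1 (Vix j) = 0) -> (forall j, X2 (Vix j) = 0) ->
  (forall j, Y1 (Vix j) = 0) -> (forall j, Y2 (Vix j) = 0) ->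
  \sum_(e < n) \sum_(f < n) invmx (g P) e f * (X1 f * Y1 e - X2 f * Y2 e)
  = \sum_(l < k) eps l * (X1 (Six l) * Y1 (Six l) - X2 (Six l) * Y2 (Six l)).
Proof.
move=> hX1 hX2 hY1 hY2.
under eq_bigr => e _ do rewrite sum_blocks.
rewrite big_split big_split /=.
rewrite [X in X + _ + _](_ : _ = 0); last first.
  rewrite exchange_big big1 // => j _.
  transitivity (\sum_(e < n) (X1 (Uix j) * Y1 e - X2 (Uix j) * Y2 e) * ((e == Vix j)%:R : R)).
    by apply: eq_bigr => e _; rewrite HcolU mulrC.
  by rewrite sum_pick hY1 hY2 !mulr0 subrr.
rewrite [X in _ + X + _](_ : _ = 0); last first.
  by rewrite big1 // => e _; rewrite big1 // => j _; rewrite hX1 hX2 !mul0r subrr mulr0.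
rewrite add0r add0r exchange_big; apply: eq_bigr => l _.
transitivity (\sum_(e < n) (eps l * (X1 (Six l) * Y1 e - X2 (Six l) * Y2 e)) * ((e == Six l)%:R : R)).
  by apply: eq_bigr => e _; rewrite HcolS; ring.
by rewrite sum_pick.
Qed.
End Main3.
Section Main4.
Variables (R : realType) (k : nat) (eps : 'I_k -> R) (F : 'I_k -> R -> R).
Hypothesis hsmooth : forall (i : 'I_k) (n : nat) (x : R), derivable (derive1n n (F i)) x 1.
Hypothesis heps : forall i, eps i = 1 \/ eps i = -1.
Local Notation n := (dimF k).
Local Notation F1 i := ((F i)^`()%classic).
Local Notation F2 i := (((F i)^`())^`()%classic).
Local Notation g := (gF F eps).

Definition ddA (P : 'rV[R]_n) (i : 'I_k) : 'M[R]_n :=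
  (2 * F2 i (P 0 (Ui i)) * P 0 (Six i)) *: Dmx i
  + (2 * F1 i (P 0 (Ui i))) *: (delta_mx (Ui i) (Six i) + delta_mx (Six i) (Ui i)).
Definition ddB (i : 'I_k) : 'M[R]_n :=
  (-2) *: (delta_mx (Six i) (U0 k) + delta_mx (U0 k) (Six i)).
Definition Gm (P : 'rV[R]_n) (i : 'I_k) : 'M[R]_n :=
  (- F i (P 0 (Ui i))) *: Smx i + (P 0 (U0 k)) *: Dmx i.

Definition Tm (P : 'rV[R]_n) (i : 'I_k) (a b c d : 'I_n) : R :=
  (ddA P i a c * Smx i b d + Smx i a c * ddA P i b d
   - ddA P i a d * Smx i b c - Smx i a d * ddA P i b c) / 2
  + (ddB i a c * Dmx i b d + Dmx i a c * ddB i b d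
   - ddB i a d * Dmx i b c - Dmx i a d * ddB i b c) / 2
  - eps i * (Gm P i a d * Gm P i b c - Gm P i a c * Gm P i b d).

Lemma Rcoord_E P a b c d : Rcoord g P a b c d = \sum_(i < k) Tm P i a b c d.
Proof.
rewrite /Rcoord !(dGamma_E eps hsmooth).
have -> : \sum_(e < n) \sum_(f < n) invmx (g P) e f *
       (Gamma1 g P f b c * Gamma1 g P e a d - Gamma1 g P f a c * Gamma1 g P e b d)
  = \sum_(l < k) eps l * (Gamma1 g P (Six l) b c * Gamma1 g P (Six l) a d
                          - Gamma1 g P (Six l) a c * Gamma1 g P (Six l) b d).
  by apply: (@quadH R k eps F heps P (fun f => Gamma1 g P f b c) (fun e => Gamma1 g P e a d) (fun f => Gamma1 g P f a c) (fun e => Gamma1 g P e b d)) => j; apply: (Gamma_V eps hsmooth).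
rewrite /dtmpl -sumrB -sumrB; apply: eq_bigr => i _.
rewrite !(Gamma_S eps hsmooth).
rewrite /Tm /ddA /ddB /Gm /aG /bG /eG /tG /Smx /Dmx /symE /ind.
rewrite !mxE !bR.
field; by [].
Qed.
End Main4.
Section Quad.
Variables (R : realType) (k : nat).
Local Notation n := (dimF k).
Variables (x y z w : 'rV[R]_n).

Definition Qd (T : 'I_n -> 'I_n -> 'I_n -> 'I_n -> R) : R :=
  \sum_(a < n) \sum_(b < n) \sum_(c < n) \sum_(d < n)
    (x 0 a * y 0 b * z 0 c * w 0 d * T a b c d).

Lemma QdD T1 T2 : Qd (fun a b c d => T1 a b c d + T2 a b c d) = Qd T1 + Qd T2.
Proof.
rewrite /Qd -big_split; apply: eq_bigr => a _; rewrite -big_split; apply: eq_bigr => b _.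
rewrite -big_split; apply: eq_bigr => c _; rewrite -big_split; apply: eq_bigr => d _.
by rewrite mulrDr.
Qed.

Lemma QdN T : Qd (fun a b c d => - T a b c d) = - Qd T.
Proof.
rewrite /Qd -sumrN; apply: eq_bigr => a _; rewrite -sumrN; apply: eq_bigr => b _.
rewrite -sumrN; apply: eq_bigr => c _; rewrite -sumrN; apply: eq_bigr => d _.
by rewrite mulrN.
Qed.

Lemma QdB T1 T2 : Qd (fun a b c d => T1 a b c d - T2 a b c d) = Qd T1 - Qd T2.
Proof. by rewrite QdD QdN. Qed.

Lemma QdZl (s : R) T : Qd (fun a b c d => s * T a b c d) = s * Qd T.
Proof.
rewrite /Qd mulr_sumr; apply: eq_bigr => a _; rewrite mulr_sumr; apply: eq_bigr => b _.
rewrite mulr_sumr; apply: eq_bigr => c _; rewrite mulr_sumr; apply: eq_bigr => d _.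
by rewrite mulrCA.
Qed.

Lemma QdZr (s : R) T : Qd (fun a b c d => T a b c d * s) = Qd T * s.
Proof.
rewrite mulrC -QdZl; congr Qd; apply: funext => a; apply: funext => b.
by apply: funext => c; apply: funext => d; rewrite mulrC.
Qed.

Lemma QdSum (T : 'I_k -> 'I_n -> 'I_n -> 'I_n -> 'I_n -> R) :
  Qd (fun a b c d => \sum_(i < k) T i a b c d) = \sum_(i < k) Qd (T i).
Proof.
rewrite /Qd [RHS]exchange_big; apply: eq_bigr => a _.
rewrite [RHS]exchange_big; apply: eq_bigr => b _.
rewrite [RHS]exchange_big; apply: eq_bigr => c _.
rewrite [RHS]exchange_big; apply: eq_bigr => d _.
by rewrite mulr_sumr.
Qed.

Lemma bformE (M : 'M[R]_n) (u v : 'rV[R]_n) :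
  bform M u v = \sum_(a < n) \sum_(c < n) u 0 a * v 0 c * M a c.
Proof.
rewrite /bform mxE exchange_big; apply: eq_bigr => c _.
rewrite !mxE mulr_suml; apply: eq_bigr => a _; ring.
Qed.

Lemma QdM1 (M N : 'M[R]_n) :
  Qd (fun a b c d => M a c * N b d) = bform M x z * bform N y w.
Proof.
rewrite !bformE /Qd mulr_suml; apply: eq_bigr => a _.
rewrite mulr_suml.
under [RHS]eq_bigr => c _ do rewrite mulr_sumr.
rewrite exchange_big; apply: eq_bigr => b _.
apply: eq_bigr => c _; rewrite mulr_sumr; apply: eq_bigr => d _; ring.
Qed.

Lemma QdM2 (M N : 'M[R]_n) :
  Qd (fun a b c d => M a d * N b c) = bform M x w * bform N y z.
Proof.
rewrite !bformE /Qd mulr_suml; apply: eq_bigr => a _.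
rewrite mulr_suml.
under [RHS]eq_bigr => c _ do rewrite mulr_sumr.
rewrite [RHS]exchange_big; apply: eq_bigr => b _.
under [RHS]eq_bigr => d _ do rewrite mulr_sumr.
rewrite [RHS]exchange_big; apply: eq_bigr => c _; apply: eq_bigr => d _; ring.
Qed.
End Quad.
Section Main5.
Variables (R : realType) (k : nat) (eps : 'I_k -> R) (F : 'I_k -> R -> R).
Hypothesis hsmooth : forall (i : 'I_k) (n : nat) (x : R), derivable (derive1n n (F i)) x 1.
Hypothesis heps : forall i, eps i = 1 \/ eps i = -1.
Local Notation n := (dimF k).
Local Notation g := (gF F eps).

Definition Cv (P : 'rV[R]_n) (i : 'I_k) (x y z w : 'rV[R]_n) : R :=
  (bform (ddA F P i) x z * bform (Smx i) y w + bform (Smx i) x z * bform (ddA F P i) y w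
   - bform (ddA F P i) x w * bform (Smx i) y z - bform (Smx i) x w * bform (ddA F P i) y z) / 2
  + (bform (ddB R i) x z * bform (Dmx i) y w + bform (Dmx i) x z * bform (ddB R i) y w
   - bform (ddB R i) x w * bform (Dmx i) y z - bform (Dmx i) x w * bform (ddB R i) y z) / 2
  - eps i * (bform (Gm F P i) x w * bform (Gm F P i) y z - bform (Gm F P i) x z * bform (Gm F P i) y w).

Lemma curvP_E P x y z w : curvP g P x y z w = \sum_(i < k) Cv P i x y z w.
Proof.
have -> : curvP g P x y z w = Qd x y z w (fun a b c d => Rcoord g P a b c d) by [].
have -> : (fun a b c d => Rcoord g P a b c d) =
  (fun a b c d => \sum_(i < k) Tm eps F P i a b c d).
  apply: funext => a; apply: funext => b; apply: funext => c; apply: funext => d.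
  by rewrite (Rcoord_E hsmooth heps P a b c d).
rewrite QdSum; apply: eq_bigr => i _.
rewrite /Tm !(QdB, QdD, QdZr, QdZl, QdM1, QdM2).
done.
Qed.
End Main5.
Lemma sum_pick' (R : pzSemiRingType) (I : finType) (j : I) (f : I -> R) :
  \sum_(i : I) f i * (j == i)%:R = f j.
Proof. by under eq_bigr => i _ do rewrite eq_sym; rewrite sum_pick. Qed.

Section BF.
Variables (R : realType) (k : nat).
Local Notation n := (dimF k).
Implicit Types (M N : 'M[R]_n) (u v : 'rV[R]_n).

Lemma bformD M N u v : bform (M + N) u v = bform M u v + bform N u v.
Proof. by rewrite /bform mulmxDr mulmxDl mxE. Qed.

Lemma bformZ (c : R) M u v : bform (c *: M) u v = c * bform M u v.
Proof. by rewrite /bform -scalemxAr -scalemxAl mxE. Qed.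

Lemma bform_sum (M : 'I_k -> 'M[R]_n) u v :
  bform (\sum_(i < k) M i) u v = \sum_(i < k) bform (M i) u v.
Proof. by rewrite /bform mulmx_sumr mulmx_suml summxE. Qed.

Lemma bform_sum1 (M : 'I_k.+1 -> 'M[R]_n) u v :
  bform (\sum_(i < k.+1) M i) u v = \sum_(i < k.+1) bform (M i) u v.
Proof. by rewrite /bform mulmx_sumr mulmx_suml summxE. Qed.

Lemma bform_delta (p q : 'I_n) u v : bform (delta_mx p q) u v = u 0 p * v 0 q.
Proof.
rewrite bformE.
transitivity (\sum_(a < n) (u 0 a * v 0 q) * (a == p)%:R); last by rewrite sum_pick.
apply: eq_bigr => a _.
transitivity (\sum_(c < n) (u 0 a * v 0 c * (a == p)%:R) * (c == q)%:R); last by rewrite sum_pick; ring.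
by apply: eq_bigr => c _; rewrite mxE bR; ring.
Qed.

Lemma bform_ee M (r c : 'I_n) : bform M (delta_mx 0 r) (delta_mx 0 c) = M r c.
Proof.
rewrite bformE.
transitivity (\sum_(a < n) M a c * (a == r)%:R); last by rewrite sum_pick.
apply: eq_bigr => a _.
transitivity (\sum_(c' < n) (M a c' * (a == r)%:R) * (c' == c)%:R); last by rewrite sum_pick.
by apply: eq_bigr => c' _; rewrite !mxE /=; ring.
Qed.

Lemma rowdelta u (p q : 'I_n) : u *m delta_mx p q = u 0 p *: delta_mx 0 q.
Proof.
apply/matrixP => i j; rewrite (ord1 i) !mxE.
transitivity (\sum_(m < n) (u 0 m * (j == q)%:R) * (m == p)%:R); last by rewrite sum_pick.
by apply: eq_bigr => m _; rewrite !mxE bR; ring.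
Qed.
End BF.
Section PhiDef.
Variables (R : realType) (k : nat) (eps : 'I_k -> R) (F : 'I_k -> R -> R) (P : 'rV[R]_(dimF k)).
Local Notation n := (dimF k).
Local Notation F1 i := ((F i)^`()%classic).

Definition V0 : 'I_n := Vix (ord0 : 'I_k.+1).
Definition Vi (i : 'I_k) : 'I_n := Vix (lift ord0 i).

Definition cc (i : 'I_k) : R := F1 i (P 0 (Ui i)) + 1.
Definition nu (i : 'I_k) : R := if 0 < cc i then 1 else -1.
Definition mu (i : 'I_k) : R := Num.sqrt `|cc i|.
Definition rho (i : 'I_k) : R := eps i * F i (P 0 (Ui i)) ^+ 2 / (2 * mu i ^+ 2).
Definition kap (i : 'I_k) : R := - eps i * nu i * rho i.
Definition tau (i : 'I_k) : R := - eps i * rho i ^+ 2 / 2.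
Definition sig (i : 'I_k) : R := 2 * F i (P 0 (Ui i)) * P 0 (Six i).
Definition om (i : 'I_k) : R := - P 0 (U0 k) * P 0 (Six i) / mu i.

Definition Phi : 'M[R]_n :=
  delta_mx (U0 k) (U0 k) + delta_mx V0 V0 +
  \sum_(i < k) (mu i *: delta_mx (Ui i) (Ui i) + nu i *: delta_mx (Six i) (Six i)
     + rho i *: delta_mx (U0 k) (Six i) + kap i *: delta_mx (Six i) V0
     + tau i *: delta_mx (U0 k) V0 + sig i *: delta_mx (Ui i) V0
     + (mu i)^-1 *: delta_mx (Vi i) (Vi i) + om i *: delta_mx (Ui i) (Vi i)).

Lemma xPhi (x : 'rV[R]_n) : x *m Phi =
  x 0 (U0 k) *: delta_mx 0 (U0 k) + x 0 V0 *: delta_mx 0 V0 +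
  \sum_(i < k) ((mu i * x 0 (Ui i)) *: delta_mx 0 (Ui i) + (nu i * x 0 (Six i)) *: delta_mx 0 (Six i)
     + (rho i * x 0 (U0 k)) *: delta_mx 0 (Six i) + (kap i * x 0 (Six i)) *: delta_mx 0 V0
     + (tau i * x 0 (U0 k)) *: delta_mx 0 V0 + (sig i * x 0 (Ui i)) *: delta_mx 0 V0
     + ((mu i)^-1 * x 0 (Vi i)) *: delta_mx 0 (Vi i) + (om i * x 0 (Ui i)) *: delta_mx 0 (Vi i)).
Proof.
rewrite /Phi !mulmxDr mulmx_sumr !rowdelta; congr (_ + _).
apply: eq_bigr => i _; rewrite !mulmxDr -!scalemxAr !rowdelta !scalerA.
done.
Qed.

Ltac phisimp := rewrite /V0 /Vi /U0 /Ui ?eqidx /= ?fR ?tR.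

Lemma PhiU0 (x : 'rV[R]_n) : (x *m Phi) 0 (U0 k) = x 0 (U0 k).
Proof.
rewrite xPhi !(mxE, summxE) big1; first by phisimp; ring.
by move=> i _; rewrite !mxE; phisimp; ring.
Qed.

Lemma PhiUi (x : 'rV[R]_n) j : (x *m Phi) 0 (Ui j) = mu j * x 0 (Ui j).
Proof.
rewrite xPhi !(mxE, summxE).
rewrite (eq_bigr (fun i => (mu i * x 0 (Ui i)) * (j == i)%:R)); last first.
  by move=> i _; rewrite !mxE; phisimp; rewrite eq_sym; ring.
by rewrite sum_pick'; phisimp; ring.
Qed.

Lemma PhiS (x : 'rV[R]_n) j : (x *m Phi) 0 (Six j) = nu j * x 0 (Six j) + rho j * x 0 (U0 k).
Proof.
rewrite xPhi !(mxE, summxE).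
rewrite (eq_bigr (fun i => (nu i * x 0 (Six i) + rho i * x 0 (U0 k)) * (j == i)%:R)); last first.
  by move=> i _; rewrite !mxE; phisimp; rewrite eq_sym; ring.
by rewrite sum_pick'; phisimp; ring.
Qed.

Lemma PhiV0 (x : 'rV[R]_n) : (x *m Phi) 0 V0 = x 0 V0 +
  \sum_(i < k) (kap i * x 0 (Six i) + tau i * x 0 (U0 k) + sig i * x 0 (Ui i)).
Proof.
rewrite xPhi !(mxE, summxE).
rewrite (eq_bigr (fun i => (kap i * x 0 (Six i) + tau i * x 0 (U0 k) + sig i * x 0 (Ui i)))); last first.
  by move=> i _; rewrite !mxE; phisimp; ring.
by phisimp; ring.
Qed.

Lemma PhiVi (x : 'rV[R]_n) j : (x *m Phi) 0 (Vi j) = (mu j)^-1 * x 0 (Vi j) + om j * x 0 (Ui j).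
Proof.
rewrite xPhi !(mxE, summxE).
rewrite (eq_bigr (fun i => ((mu i)^-1 * x 0 (Vi i) + om i * x 0 (Ui i)) * (j == i)%:R)); last first.
  by move=> i _; rewrite !mxE; phisimp; rewrite eq_sym; ring.
by rewrite sum_pick'; phisimp; ring.
Qed.
End PhiDef.
Section Final.
Variables (R : realType) (k : nat) (eps : 'I_k -> R) (F : 'I_k -> R -> R).
Hypothesis heps : forall i, eps i = 1 \/ eps i = -1.
Hypothesis hF : forall (i : 'I_k) (u : R), derive1 (F i) u + 1 != 0.
Variable P : 'rV[R]_(dimF k).
Local Notation n := (dimF k).

Lemma bform_modelG (u v : 'rV[R]_n) : bform (modelG eps) u v =
  u 0 (U0 k) * v 0 (V0 k) + u 0 (V0 k) * v 0 (U0 k) +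
  \sum_(i < k) (u 0 (Ui i) * v 0 (Vi i) + u 0 (Vi i) * v 0 (Ui i)
                + eps i * (u 0 (Six i) * v 0 (Six i))).
Proof.
rewrite /modelG bformD bform_sum1 bform_sum big_ord_recl /=.
rewrite /symE bformD !bform_delta.
under eq_bigr => i _ do rewrite bformD !bform_delta.
under [X in _ + X]eq_bigr => i _ do rewrite bformZ bform_delta.
by rewrite -addrA -big_split.
Qed.

Lemma bform_gF (u v : 'rV[R]_n) : bform (gF F eps P) u v =
  u 0 (U0 k) * v 0 (V0 k) + u 0 (V0 k) * v 0 (U0 k) +
  \sum_(i < k) ((2 * F i (P 0 (Ui i)) * P 0 (Six i)) * (u 0 (U0 k) * v 0 (Ui i) + u 0 (Ui i) * v 0 (U0 k))
                + (- 2 * P 0 (U0 k) * P 0 (Six i)) * (u 0 (Ui i) * v 0 (Ui i))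
                + (u 0 (Ui i) * v 0 (Vi i) + u 0 (Vi i) * v 0 (Ui i)
                + eps i * (u 0 (Six i) * v 0 (Six i)))).
Proof.
rewrite gF_split bformD bform_modelG bform_sum addrC -addrA -big_split; congr (_ + _).
apply: eq_bigr => i _ /=; rewrite bformD !bformZ /Smx /Dmx /symE bformD !bform_delta; ring.
Qed.

Lemma mu_facts i : mu F P i != 0 /\
  ((nu F P i = 1 /\ mu F P i ^+ 2 = cc F P i) \/ (nu F P i = -1 /\ mu F P i ^+ 2 = - cc F P i)).
Proof.
have hc : cc F P i != 0 by rewrite /cc; apply: hF.
have hsq : mu F P i ^+ 2 = `|cc F P i| by rewrite /mu sqr_sqrtr // normr_ge0.
split; first by rewrite /mu sqrtr_eq0 normr_le0.
rewrite /nu; case: ifP => h; [left | right]; rewrite hsq; split => //.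
  by rewrite gtr0_norm.
by rewrite ler0_norm // leNgt h.
Qed.

Lemma metric (x y : 'rV[R]_n) :
  bform (modelG eps) (x *m Phi eps F P) (y *m Phi eps F P) = bform (gF F eps P) x y.
Proof.
rewrite bform_modelG bform_gF !PhiU0 !PhiV0.
under [X in _ + X = _]eq_bigr => i _ do rewrite !PhiUi !PhiVi !PhiS.
rewrite mulrDr mulrDl mulr_sumr mulr_suml -!addrA; congr (_ + _).
rewrite addrCA; congr (_ + _).
rewrite -!big_split; apply: eq_bigr => i /= _.
have [hmu hnu] := mu_facts i.
rewrite /kap /tau /sig /om /rho.
by case: hnu => [[-> _]|[-> _]]; field.
Qed.
End Final.
Section Final2.
Variables (R : realType) (k : nat) (eps : 'I_k -> R) (F : 'I_k -> R -> R).
Hypothesis hsmooth : forall (i : 'I_k) (n : nat) (x : R), derivable (derive1n n (F i)) x 1.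
Hypothesis heps : forall i, eps i = 1 \/ eps i = -1.
Hypothesis hF : forall (i : 'I_k) (u : R), derive1 (F i) u + 1 != 0.
Variable P : 'rV[R]_(dimF k).
Local Notation n := (dimF k).

Lemma curv_id (x y z w : 'rV[R]_n) :
  modelR (x *m Phi eps F P) (y *m Phi eps F P) (z *m Phi eps F P) (w *m Phi eps F P)
  = curvP (gF F eps) P x y z w.
Proof.
rewrite (curvP_E hsmooth heps) /modelR; apply: eq_bigr => i _.
rewrite /wedge2 !PhiU0 !PhiUi !PhiS.
rewrite /Cv /ddA /ddB /Gm /Smx /Dmx /symE !(bformD, bformZ, bform_delta).
have [hmu hnu] := mu_facts hF P i.
rewrite /rho.
have hc : (F i)^`()%classic (P 0 (Ui i)) = cc F P i - 1 by rewrite /cc addrK.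
rewrite hc.
case: hnu => [[-> hm]|[-> hm]].
  rewrite -hm. field. exact: hmu. rewrite -[cc F P i]opprK -hm. field. exact: hmu.
Qed.
End Final2.
Unset Implicit Arguments.
Theorem theorem1p4 (R : realType) (k : nat) (hk : (1 <= k)%N)
  (eps : 'I_k -> R) (heps : forall i, eps i = 1 \/ eps i = -1)
  (F : 'I_k -> R -> R)
  (hsmooth : forall (i : 'I_k) (n : nat) (x : R), derivable (derive1n n (F i)) x 1)
  (hF : forall (i : 'I_k) (u : R), derive1 (F i) u + 1 != 0) :
  forall P : 'rV[R]_(dimF k),
    exists Phi : 'M[R]_(dimF k),
      [/\ Phi \in unitmx,
          forall x y : 'rV[R]_(dimF k),
            bform (modelG eps) (x *m Phi) (y *m Phi) = bform (gF F eps P) x y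
        & forall x y z w : 'rV[R]_(dimF k),
            modelR (x *m Phi) (y *m Phi) (z *m Phi) (w *m Phi)
              = curvP (gF F eps) P x y z w].
Proof.
move=> P; exists (Phi eps F P); split.
- have hM : Phi eps F P *m modelG eps *m (Phi eps F P)^T = gF F eps P.
    apply/matrixP => r c.
    rewrite -[LHS]bform_ee -[RHS]bform_ee -(metric eps hF).
    by rewrite /bform trmx_mul !mulmxA.
  have := gunit F heps P; rewrite -hM !unitmx_mul.
  by case/andP => /andP [].
- by move=> x y; exact: (metric eps hF).
- by move=> x y z w; exact: (curv_id hsmooth heps hF).
Qed.
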